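(* Let $\sigma:\mathcal C^*\to\mathcal B^*$ and $\varphi:\mathcal B^*\to\mathcal A^*$ be morphisms of class $P_{ret}$ (with $\mathcal A,\mathcal B,\mathcal C$ finite alphabets). Then the composition $\varphi\sigma:\mathcal C^*\to\mathcal A^*$ is of class $P_{ret}$.
   Context: For a finite word $w$, $\overline{w}$ denotes its reversal; $w$ is a palindrome if $w=\overline w$. A morphism $\varphi:\mathcal B^*\to\mathcal A^*$ is of class $P_{ret}$ if there exists a palindrome $p\in\mathcal A^*$ such that: (a) $\varphi(b)p$ is a palindrome for every $b\in\mathcal B$; (b) for every $b\in\mathcal B$, $\varphi(b)p$ contains exactly two occurrences of $p$, one as a prefix and one as a suffix; (c) $\varphi(b)\ne\varphi(c)$ for all distinct $b,c\in\mathcal B$. *)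

(* Defs.v *)
From mathcomp Require Import all_boot.
Set Implicit Arguments. Unset Strict Implicit. Unset Printing Implicit Defensive.

Definition morph_apply (B A : Type) (f : B -> seq A) (w : seq B) : seq A :=
  flatten (map f w).

Definition morph_comp (C B A : Type) (phi : B -> seq A) (sigma : C -> seq B)
  : C -> seq A := fun c => morph_apply phi (sigma c).

Definition palindrome (A : eqType) (w : seq A) : bool := rev w == w.

Definition occurs_at (A : eqType) (p w : seq A) (i : nat) : bool :=
  (i + size p <= size w) && (take (size p) (drop i w) == p).

Definition occ_count (A : eqType) (p w : seq A) : nat :=
  count (occurs_at p w) (iota 0 (size w).+1).

Definition P_ret (B A : finType) (phi : B -> seq A) : Prop :=
  exists p : seq A,
    palindrome p /\
    (forall b : B, palindrome (phi b ++ p)) /\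
    (forall b : B, [/\ occ_count p (phi b ++ p) = 2,
                       prefix p (phi b ++ p) & suffix p (phi b ++ p)]) /\
    (forall b c : B, b <> c -> phi b <> phi c).

(* Main.v *)
Require Import Defs.
From mathcomp Require Import all_boot zify.
Set Implicit Arguments. Unset Strict Implicit. Unset Printing Implicit Defensive.

Lemma count_exact (a : pred nat) (s t : seq nat) :
  uniq s -> uniq t -> {subset t <= s} -> (forall x, x \in t -> a x) ->
  (forall x, x \in s -> a x -> x \in t) -> count a s = size t.
Proof.
move=> us ut ts at_ sa.
rewrite (@eq_in_count _ a (mem t)); last first.
  move=> x xs /=; apply/idP/idP; [exact: sa | exact: at_].
rewrite -size_filter; apply: perm_size; apply: uniq_perm => //.
  exact: filter_uniq.
by move=> x; rewrite mem_filter; apply/andP/idP => [[]//|xt]; split => //; apply: ts.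
Qed.

Lemma count_ge (a : pred nat) (s t : seq nat) :
  uniq s -> uniq t -> {subset t <= s} -> (forall x, x \in t -> a x) ->
  size t <= count a s.
Proof.
move=> us ut ts at_.
have <- : count (mem t) s = size t by apply: count_exact => // x _.
by apply: sub_count => x /= /at_.
Qed.

Section Occ.
Variable A : eqType.
Definition occ (p w : seq A) i := exists u v, w = u ++ p ++ v /\ size u = i.

Lemma occP p w i : occurs_at p w i <-> occ p w i.
Proof.
rewrite /occurs_at; split.
  case/andP=> H1 /eqP H2; exists (take i w), (drop (size p) (drop i w)); split.
    by rewrite -{1}H2 !cat_take_drop.
  by rewrite size_takel //; lia.
case=> u [v [-> <-]]; apply/andP; split; first by rewrite !size_cat; lia.
by rewrite drop_size_cat // take_size_cat.
Qed.

Lemma occ_le p w i : occ p w i -> i + size p <= size w.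
Proof. by case=> u [v [-> <-]]; rewrite !size_cat; lia. Qed.

Lemma occ_catl p y z i : occ p (y ++ z) i -> i + size p <= size y -> occ p y i.
Proof.
case=> u [v [E Hu]] Hs; exists u, (take (size y - size u - size p) v); split=>//.
have Ey : y = take (size y) (u ++ p ++ v) by rewrite -E take_size_cat.
rewrite {1}Ey take_cat ifN; last lia.
by rewrite take_cat ifN; [do 3 f_equal; lia | lia].
Qed.

Lemma occ_catr p y z i : occ p z i -> occ p (y ++ z) (size y + i).
Proof. by case=> u [v [-> <-]]; exists (y ++ u), v; rewrite catA size_cat. Qed.

Lemma occ_catr_inv p y z i : occ p (y ++ z) i -> size y <= i -> occ p z (i - size y).
Proof.
case=> u [v [E Hu]] Hs; exists (drop (size y) u), v; split; last by rewrite size_drop; lia.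
have Ez : z = drop (size y) (u ++ p ++ v) by rewrite -E drop_size_cat.
rewrite {1}Ez drop_cat; case: ifP => // H.
have -> : size y = size u by lia.
by rewrite subnn drop0 drop_size.
Qed.

Lemma occ_catl_inv p y z i : occ p y i -> occ p (y ++ z) i.
Proof. by case=> u [v [-> <-]]; exists u, (v ++ z); rewrite -!catA. Qed.

Lemma occ0 p v : occ p (p ++ v) 0.
Proof. by exists [::], v. Qed.

Lemma occ_pre p w i v : occ (p ++ v) w i -> occ p w i.
Proof. by case=> u [x [-> <-]]; exists u, (v ++ x); rewrite -!catA. Qed.
End Occ.
Lemma cat_injl (T : Type) (s1 s2 s3 : seq T) : s1 ++ s2 = s1 ++ s3 -> s2 = s3.
Proof. by move=> /(congr1 (drop (size s1))); rewrite !drop_size_cat. Qed.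

Section Morph.
Variables (B A : finType) (f : B -> seq A) (p : seq A).
Hypothesis Hpal : palindrome p.
Hypothesis Hfpal : forall b, palindrome (f b ++ p).
Hypothesis Hocc : forall b, [/\ occ_count p (f b ++ p) = 2,
                       prefix p (f b ++ p) & suffix p (f b ++ p)].
Hypothesis Hinj : forall b c : B, b <> c -> f b <> f c.

Local Notation Phi := (morph_apply f).

Lemma Phi_cat u v : Phi (u ++ v) = Phi u ++ Phi v.
Proof. by rewrite /morph_apply map_cat flatten_cat. Qed.

Lemma Phi_cons b w : Phi (b :: w) = f b ++ Phi w.
Proof. by []. Qed.

Lemma L0 b : 0 < size (f b).
Proof.
case: (Hocc b) => Hc _ _; rewrite lt0n size_eq0; apply/eqP => E.
move: Hc; rewrite E /= /occ_count (@count_exact _ _ [:: 0]) //.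
- exact: iota_uniq.
- by move=> x; rewrite inE => /eqP ->; rewrite mem_iota.
- by move=> x; rewrite inE => /eqP ->; apply/occP; exists [::], [::]; rewrite cats0.
- by move=> x _ /occP /occ_le; rewrite inE => H; apply/eqP; lia.
Qed.

Lemma L1 b i : occ p (f b ++ p) i -> i = 0 \/ i = size (f b).
Proof.
move=> Hi; case: (Hocc b) => Hc /prefixP [s Hs] _.
have H0 := L0 b.
case: (boolP ((i == 0) || (i == size (f b)))) => [/orP [/eqP|/eqP]|]; [by left|by right|].
rewrite negb_or => /andP [n0 n1].
have : 3 <= occ_count p (f b ++ p).
  apply: (@count_ge _ _ [:: 0; size (f b); i]).
  - exact: iota_uniq.
  - rewrite /= !inE !negb_or andbT; apply/andP; split; [apply/andP; split|]; apply/eqP; move: n0 n1 => /eqP n0 /eqP n1; lia.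
  - move=> x Hx; rewrite mem_iota size_cat; move: Hx; rewrite !inE => /or3P [] /eqP ->; rewrite leq0n /= add0n ltnS ?leq0n //; [rewrite leq_addr //|].
    by have := occ_le Hi; rewrite size_cat => H; apply: leq_trans (leq_addr (size p) i) H.
  - move=> x; rewrite !inE => /or3P [] /eqP -> ; apply/occP => //.
    + by rewrite Hs; apply: occ0.
    + by have := @occ_catr _ p (f b) (p ++ [::]) 0 (occ0 _ _); rewrite cats0 addn0.
by rewrite Hc.
Qed.

Lemma L2 w : exists y, Phi w ++ p = p ++ y.
Proof.
elim: w => [|b w [y IH]]; first by exists [::]; rewrite cats0.
case: (Hocc b) => _ /prefixP [s Hs] _.
by exists (s ++ y); rewrite Phi_cons -catA IH catA Hs -catA.
Qed.

Lemma L3 w i : occ p (Phi w ++ p) i -> exists k, i = size (Phi (take k w)).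
Proof.
elim: w i => [|b w IH] i /=.
  by move=> /occ_le; rewrite /morph_apply /= => H; exists 0; rewrite /=; lia.
rewrite -/(Phi (b :: w)) Phi_cons -catA => H.
case: (leqP (size (f b)) i) => Hle.
  case: (IH _ (occ_catr_inv H Hle)) => k Hk; exists k.+1.
  rewrite /= -/(Phi (b :: take k w)) Phi_cons size_cat -Hk; by rewrite subnKC.
case: (L2 w) => y Hy; move: H; rewrite Hy catA => H.
have Hs : i + size p <= size (f b ++ p) by rewrite size_cat leq_add2r ltnW.
case: (L1 (occ_catl H Hs)) => [->|]; first by exists 0.
by move=> E; rewrite E ltnn in Hle.
Qed.

Lemma K b b' s t : f b ++ p ++ s = f b' ++ p ++ t -> size (f b) <= size (f b') -> f b = f b'.
Proof.
move=> E Hle.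
have H : occ p ((f b' ++ p) ++ t) (size (f b)).
  by rewrite -catA -E; have := occ_catr (f b) (occ0 p s); rewrite addn0.
have Hs0 : size (f b) + size p <= size (f b' ++ p) by rewrite size_cat leq_add2r.
case: (L1 (occ_catl H Hs0)) => Hs.
  by have := L0 b; rewrite Hs.
have : take (size (f b)) (f b ++ p ++ s) = take (size (f b')) (f b' ++ p ++ t).
  by rewrite E Hs.
by rewrite !take_size_cat.
Qed.

Lemma L4 u v y : Phi v ++ p = Phi u ++ p ++ y -> exists r, v = u ++ r.
Proof.
elim: u v y => [|b u IH] v y; first by exists v.
case: v => [|b' v] /=.
  rewrite -/(Phi (b :: u)) Phi_cons /= => E.
  have := congr1 size E; rewrite !size_cat; have := L0 b; lia.
rewrite -/(Phi (b :: u)) -/(Phi (b' :: v)) !Phi_cons -!catA => E.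
case: (L2 u) => y1 Hy1; case: (L2 v) => y2 Hy2.
have E' : f b ++ p ++ (y1 ++ y) = f b' ++ p ++ y2.
  by rewrite -Hy2 E (catA (Phi u)) Hy1 -catA.
have Ef : f b = f b'.
  case: (leqP (size (f b)) (size (f b'))) => Hl; first exact: K E' Hl.
  by symmetry; apply: K (esym E') (ltnW Hl).
have Eb : b = b'.
  by case: (eqVneq b b') => // /eqP Hn; exfalso; apply: (Hinj Hn).
subst b'; move: E => /cat_injl E.
by case: (IH _ _ E) => r ->; exists r.
Qed.

Lemma P1 w : rev (Phi w ++ p) = Phi (rev w) ++ p.
Proof.
elim: w => [|b w IH] /=; first by move: Hpal => /eqP.
rewrite -/(Phi (b :: w)) Phi_cons -catA rev_cat IH rev_cons -cats1 Phi_cat -!catA.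
have Hb := Hfpal b; move: Hb => /eqP; rewrite rev_cat (eqP Hpal) => ->.
by [].
Qed.

Lemma Phi_size w : w != [::] -> 0 < size (Phi w).
Proof. by case: w => // b w _; rewrite Phi_cons size_cat; have := L0 b; lia. Qed.
End Morph.

Theorem proposition5p3 (A B C : finType) (sigma : C -> seq B) (phi : B -> seq A) :
  P_ret sigma -> P_ret phi -> P_ret (morph_comp phi sigma).
Proof.
move=> [q [Hq [Hsq [Hoq Hiq]]]] [p [Hp [Hfp [Hop Hip]]]].
exists (morph_apply phi q ++ p).
have Hpre : forall c, prefix (morph_apply phi q ++ p)
    (morph_apply phi (sigma c ++ q) ++ p).
  move=> c; case: (Hoq c) => _ /prefixP [y Ey] _.
  rewrite Ey Phi_cat -catA; case: (L2 Hop y) => z Hz; rewrite Hz.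
  by apply/prefixP; exists z; rewrite catA.
split; first by rewrite /palindrome (P1 Hp Hfp) (eqP Hq).
split.
  by move=> c; rewrite /morph_comp catA -Phi_cat /palindrome (P1 Hp Hfp) (eqP (Hsq c)).
split; last first.
  move=> b c Hbc Heq; case: (L4 Hp Hop Hip (y := [::]) (_ : morph_apply phi (sigma c) ++ p = morph_apply phi (sigma b) ++ p ++ [::])).
    by rewrite cats0; move: Heq; rewrite /morph_comp => ->.
  move=> r1 E1.
  case: (L4 Hp Hop Hip (y := [::]) (_ : morph_apply phi (sigma b) ++ p = morph_apply phi (sigma c) ++ p ++ [::])).
    by rewrite cats0; move: Heq; rewrite /morph_comp => ->.
  move=> r2 E2.
  have : size (sigma b) = size (sigma c).
    by have := congr1 size E1; have := congr1 size E2; rewrite !size_cat; lia.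
  move=> Hs.
  have Er : r1 = [::].
    by apply/eqP; rewrite -size_eq0; have := congr1 size E1; rewrite !size_cat /=; lia.
  by apply: (Hiq _ _ Hbc); move: E1; rewrite Er cats0 => ->.
move=> c; rewrite /morph_comp catA -Phi_cat; split; [|exact: Hpre|by rewrite Phi_cat -catA suffix_suffix].
set w := sigma c ++ q.
set m := size (morph_apply phi (sigma c)).
have Hm : 0 < m.
  apply: (Phi_size Hp Hop); rewrite -size_eq0 -lt0n; exact: (L0 Hq Hoq c).
have Hw : morph_apply phi w ++ p = morph_apply phi (sigma c) ++ (morph_apply phi q ++ p).
  by rewrite Phi_cat catA.
rewrite /occ_count (@count_exact _ _ [:: 0; m]) //.
- exact: iota_uniq.
- by rewrite /= inE andbT eq_sym -lt0n.
- move=> x Hx; rewrite mem_iota; move: Hx; rewrite !inE => /orP [] /eqP ->; first by [].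
  by rewrite Hw size_cat /= add0n ltnS leq_addr.
- move=> x; rewrite !inE => /orP [] /eqP ->; apply/occP.
    by move: (Hpre c) => /prefixP [z ->]; apply: occ0.
  by rewrite Hw; have := occ_catr (morph_apply phi (sigma c)) (occ0 (morph_apply phi q ++ p) [::]); rewrite cats0 addn0.
move=> x _ /occP Hx.
case: (L2 Hop q) => z0 Hz0.
have Hx' := Hx; rewrite Hz0 in Hx'; have := L3 Hp Hop (occ_pre Hx') => [[k Hk]].
move: Hx; rewrite -(cat_take_drop k w) Phi_cat -catA => Hx.
have Hle : size (morph_apply phi (take k w)) <= x by rewrite Hk.
have := occ_catr_inv Hx Hle; rewrite Hk subnn => -[u [v [Ed Hu]]].
move: Hu => /eqP; rewrite size_eq0 => /eqP Hu; subst u.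
rewrite /= -catA in Ed; case: (L4 Hp Hop Hip Ed) => r Er.
have Hocq : occ q w (size (take k w)).
  by exists (take k w), r; rewrite -Er cat_take_drop.
case: (L1 Hq Hoq Hocq) => Hs.
  by move: Hs => /eqP; rewrite size_eq0 => /eqP Ht; rewrite Ht inE.
have Ht : take k w = sigma c.
  have E1 : take (size (sigma c)) (take k w ++ drop k w) = take k w.
    by rewrite -Hs take_size_cat.
  have E2 : take (size (sigma c)) w = sigma c by rewrite /w take_size_cat.
  by rewrite -E2 -E1 cat_take_drop.
by rewrite Ht !inE eqxx orbT.
Qed.
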